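(* A real Banach space $X$ has the Uniform Mazur Intersection Property if and only if $\beta(t) > 0$ for every $0<t<1$.
   Context: $B(\cdot)$, $S(\cdot)$ denote closed unit ball and unit sphere. $X$ has the Uniform Mazur Intersection Property (UMIP) if for every $\varepsilon>0$ there is $K>0$ such that for every closed bounded convex $C \subseteq X$ and $p \in X$ with $\operatorname{diam}(C) < 1/\varepsilon$ and $d(p,C) \geq \varepsilon$, there is a closed ball $B[x_0,r_0] \supseteq C$ with $d(p, B[x_0,r_0]) \geq \varepsilon/2$ and $r_0 \leq K$. For $f \in S(X^* )$, $x \in S(X)$, $0<t<1$: $\beta(f,x,t) := \inf\{1 - g(x) : g \in B(X^* ),\ \|f-g\| \geq t\}$, $\beta(f,t) := \sup_{x \in S(X)} \beta(f,x,t)$, and $\beta(t) := \inf_{f \in S(X^* )} \beta(f,t)$. *)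

(* Defs.v *)
From HB Require Import structures.
From mathcomp Require Import all_boot all_order all_algebra.
From mathcomp Require Import all_classical all_reals all_analysis.
Set Implicit Arguments. Unset Strict Implicit. Unset Printing Implicit Defensive.
Import Order.TTheory GRing.Theory Num.Theory.
Import numFieldNormedType.Exports.
Local Open Scope classical_set_scope.
Local Open Scope ring_scope.

Definition is_dual (R : realType) (X : normedModType R) (f : X -> R) : Prop :=
  (forall (a : R) (x y : X), f (a *: x + y) = a * f x + f y) /\ continuous f.

Definition unit_ball (R : realType) (X : normedModType R) : set X :=
  [set x | `|x| <= 1].

Definition unit_sphere (R : realType) (X : normedModType R) : set X :=
  [set x | `|x| = 1].

Definition dnorm (R : realType) (X : normedModType R) (f : X -> R) : \bar R :=
  ereal_sup [set (`|f x|)%:E | x in @unit_ball R X].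

Definition dual_ball (R : realType) (X : normedModType R) : set (X -> R) :=
  [set g | is_dual g /\ (dnorm g <= 1%:E)%E].
Definition dual_sphere (R : realType) (X : normedModType R) : set (X -> R) :=
  [set g | is_dual g /\ dnorm g = 1%:E].

Definition beta_fxt (R : realType) (X : normedModType R)
  (f : X -> R) (x : X) (t : R) : \bar R :=
  ereal_inf [set (1 - g x)%:E | g in
    [set g | @dual_ball R X g /\ (t%:E <= dnorm (fun y => (f y - g y)%R))%E]].

Definition beta_ft (R : realType) (X : normedModType R) (f : X -> R) (t : R)
  : \bar R :=
  ereal_sup [set beta_fxt f x t | x in @unit_sphere R X].

Definition beta (R : realType) (X : normedModType R) (t : R) : \bar R :=
  ereal_inf [set beta_ft f t | f in @dual_sphere R X].

Definition cball (R : realType) (X : normedModType R) (x0 : X) (r0 : R) : set X :=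
  [set y | `|y - x0| <= r0].

Definition dist_set (R : realType) (X : normedModType R) (p : X) (A : set X)
  : \bar R :=
  ereal_inf [set (`|p - a|)%:E | a in A].

Definition diam (R : realType) (X : normedModType R) (A : set X) : \bar R :=
  ereal_sup [set (`|a - b|)%:E | a in A & b in A].

Definition UMIP (R : realType) (X : normedModType R) : Prop :=
  forall eps : R, 0 < eps ->
  exists K : R, 0 < K /\
    forall (C : set X) (p : X),
      C !=set0 -> closed C -> bounded_set C ->
      convex_set (C : set (convex_lmodType X)) ->
      (diam C < (eps^-1)%:E)%E -> (eps%:E <= dist_set p C)%E ->
      exists (x0 : X) (r0 : R),
        C `<=` cball x0 r0 /\ ((eps / 2)%:E <= dist_set p (cball x0 r0))%E
        /\ r0 <= K.

(* Main.v *)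
Require Import Defs.
From HB Require Import structures.
From mathcomp Require Import all_boot all_order all_algebra.
From mathcomp Require Import all_classical all_reals all_analysis.
Import Order.TTheory GRing.Theory Num.Theory.
Import numFieldNormedType.Exports.
Local Open Scope classical_set_scope.
Local Open Scope ring_scope.
From mathcomp Require Import ring lra.
Set Implicit Arguments. Unset Strict Implicit. Unset Printing Implicit Defensive.

Section Sublin.
Context {R : realType} {X : normedModType R}.

Definition lin (f : X -> R) := forall (a : R) (x y : X), f (a *: x + y) = a * f x + f y.

Lemma lin0 f : lin f -> f 0 = 0.
Proof.
by move=> H; have := H 1 0 0; rewrite scaler0 addr0 mul1r => h; lra.
Qed.

Lemma linD f : lin f -> forall x y, f (x + y) = f x + f y.
Proof. by move=> H x y; rewrite -[x in LHS]scale1r H mul1r. Qed.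

Lemma linZ f : lin f -> forall a x, f (a *: x) = a * f x.
Proof. by move=> H a x; rewrite -[_ *: _]addr0 H lin0 // addr0. Qed.

Lemma linN f : lin f -> forall x, f (- x) = - f x.
Proof. by move=> H x; rewrite -scaleN1r linZ // mulN1r. Qed.

Lemma linB f : lin f -> forall x y, f (x - y) = f x - f y.
Proof. by move=> H x y; rewrite linD // linN. Qed.

Definition sublin (P : X -> R) :=
  (forall x y, P (x + y) <= P x + P y) /\
  (forall (s : R) x, 0 < s -> P (s *: x) <= s * P x).

Lemma sublin0 P : sublin P -> P 0 = 0.
Proof.
move=> [Hd Hs]; apply/eqP; rewrite eq_le; apply/andP; split.
  have := Hs (2^-1) 0 ltac:(by rewrite invr_gt0).
  by rewrite scaler0 => H; nra.
by have := Hd 0 0; rewrite addr0 => H; lra.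
Qed.

Lemma sublinZ P : sublin P -> forall (s : R) x, 0 < s -> P (s *: x) = s * P x.
Proof.
move=> [Hd Hs] s x s0; apply/eqP; rewrite eq_le Hs //=.
have := Hs s^-1 (s *: x) ltac:(by rewrite invr_gt0).
rewrite scalerA mulVf ?gt_eqF // scale1r => H.
by rewrite -(@ler_pM2l _ s^-1 ltac:(by rewrite invr_gt0)) mulrA mulVf ?gt_eqF // mul1r.
Qed.

Lemma sublinN P : sublin P -> forall x, - P (- x) <= P x.
Proof.
move=> HP x; have := HP.1 x (- x); rewrite subrr sublin0 //.
move=> h; lra.
Qed.

End Sublin.

Section InfCons.
Context {R : realType} {X : normedModType R}.
Variables (N : X -> R) (W : set (X * R)).
Hypothesis sN : sublin N.
Hypothesis W0 : W (0, 0).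
Hypothesis WD : forall w1 w2, W w1 -> W w2 -> W (w1.1 + w2.1, w1.2 + w2.2).
Hypothesis WZ : forall (s : R) w, 0 < s -> W w -> W (s *: w.1, s * w.2).
Hypothesis WN : forall w, W w -> w.2 <= N w.1.

Definition Qset y := [set N (y + w.1) - w.2 | w in W].
Definition Qinf y := inf (Qset y).

Lemma Qset_lb y : lbound (Qset y) (- N (- y)).
Proof.
move=> _ [w Ww <-].
have e : w.1 = (y + w.1) + - y by rewrite addrAC subrr add0r.
have h1 := sN.1 (y + w.1) (- y); rewrite -e in h1.
have h2 := WN Ww; lra.
Qed.

Lemma Qset_n0 y : Qset y !=set0.
Proof. by exists (N (y + 0) - 0); exists (0, 0). Qed.

Lemma Qinf_le y w : W w -> Qinf y <= N (y + w.1) - w.2.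
Proof.
move=> Ww; apply: ge_inf; first by exists (- N (- y)); exact: Qset_lb.
by exists w.
Qed.

Lemma Qinf_ge y : - N (- y) <= Qinf y.
Proof. exact: lb_le_inf (Qset_n0 y) (@Qset_lb y). Qed.

Lemma Qinf_leN y : Qinf y <= N y.
Proof. by have := Qinf_le y W0; rewrite addr0 subr0. Qed.

Lemma Qinf_sublin : sublin Qinf.
Proof.
split.
- move=> x y.
  suff : Qinf (x + y) - Qinf x <= Qinf y by lra.
  apply: lb_le_inf; first exact: Qset_n0.
  move=> _ [w2 Ww2 <-].
  suff : Qinf (x + y) - (N (y + w2.1) - w2.2) <= Qinf x by lra.
  apply: lb_le_inf; first exact: Qset_n0.
  move=> _ [w1 Ww1 <-].
  have := Qinf_le (x + y) (WD Ww1 Ww2) => /=.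
  have := sN.1 (x + w1.1) (y + w2.1).
  have -> : x + w1.1 + (y + w2.1) = x + y + (w1.1 + w2.1).
    by rewrite addrACA.
  lra.
- move=> s x s0.
  suff h : s^-1 * Qinf (s *: x) <= Qinf x.
    by move: h; rewrite -(ler_pM2l s0) mulrA mulfV ?gt_eqF // mul1r.
  apply: lb_le_inf; first exact: Qset_n0.
  move=> _ [w Ww <-].
  rewrite -(ler_pM2l s0) mulrA mulfV ?gt_eqF // mul1r.
  have := Qinf_le (s *: x) (WZ s0 Ww) => /=.
  rewrite -scalerDr (sublinZ sN) // mulrBr.
  lra.
Qed.

End InfCons.

Section HahnBanach.
Context {R : realType} {X : normedModType R}.

Lemma sublin_odd_lin (P : X -> R) : sublin P -> (forall a, P (- a) = - P a) -> lin P.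
Proof.
move=> sP odd.
have hD : forall x y, P (x + y) = P x + P y.
  move=> x y; apply/eqP; rewrite eq_le sP.1 /=.
  have := sP.1 (- x) (- y); rewrite -opprD !odd; lra.
have hZ : forall a x, P (a *: x) = a * P x.
  move=> a x; have [a0|a0|->] := ltgtP a 0; last by rewrite scale0r mul0r sublin0.
  - rewrite -[a]opprK scaleNr odd sublinZ // ?oppr_gt0 //; lra.
  - exact: sublinZ.
by move=> a x y; rewrite hD hZ.
Qed.

Theorem hahn_banach (Q : X -> R) : sublin Q -> exists f, lin f /\ forall x, f x <= Q x.
Proof.
move=> sQ.
pose T := {P : X -> R | sublin P /\ (forall x, P x <= Q x)}.
pose r : rel T := fun a b => `[< forall x, sval b x <= sval a x >].
have t0 : T by exists Q; split => // x.
have [t tmax] : exists t, premaximal r t.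
  apply: (ZL_preorder t0).
  - by move=> a; apply/asboolP => x.
  - move=> a b c /asboolP hab /asboolP hbc; apply/asboolP => x.
    exact: le_trans (hbc x) (hab x).
  - move=> A Atot.
    have [->|/set0P[a0 Aa0]] := eqVneq A set0; first by exists t0 => s.
    pose S y := [set sval s y | s in A].
    have Slb : forall y, lbound (S y) (- Q (- y)).
      move=> y _ [s As <-]; have := sublinN (proj1 (svalP s)) y.
      have := (proj2 (svalP s)) (- y); lra.
    have Sn0 : forall y, S y !=set0 by move=> y; exists (sval a0 y), a0.
    have Sle : forall y s, A s -> inf (S y) <= sval s y.
      by move=> y s As; apply: ge_inf; [exists (- Q (- y)); exact: Slb|exists s].
    pose Pm y := inf (S y).
    have sPm : sublin Pm.
      split.
      - move=> x y.
        suff : Pm (x + y) - Pm x <= Pm y by lra.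
        apply: lb_le_inf; first exact: Sn0.
        move=> _ [s2 As2 <-].
        suff : Pm (x + y) - sval s2 y <= Pm x by lra.
        apply: lb_le_inf; first exact: Sn0.
        move=> _ [s1 As1 <-].
        have [/asboolP h|/asboolP h] := Atot s1 s2 As1 As2.
        + have := Sle (x + y) s2 As2; have := (proj1 (svalP s2)).1 x y.
          have := h x; lra.
        + have := Sle (x + y) s1 As1; have := (proj1 (svalP s1)).1 x y.
          have := h y; lra.
      - move=> c x c0.
        suff h : c^-1 * Pm (c *: x) <= Pm x.
          by move: h; rewrite -(ler_pM2l c0) mulrA mulfV ?gt_eqF // mul1r.
        apply: lb_le_inf; first exact: Sn0.
        move=> _ [s As <-].
        rewrite -(ler_pM2l c0) mulrA mulfV ?gt_eqF // mul1r.
        have := Sle (c *: x) s As; have := (proj2 (proj1 (svalP s))) c x c0; lra.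
    have PmQ : forall x, Pm x <= Q x.
      by move=> x; have := Sle x a0 Aa0; have := (proj2 (svalP a0)) x; lra.
    exists (exist _ Pm (conj sPm PmQ)) => s As; apply/asboolP => x /=.
    exact: Sle.
pose P := sval t.
have [sP PQ] := svalP t.
have odd : forall a, P (- a) = - P a.
  move=> a.
  pose W := [set w : X * R | exists c : R, 0 <= c /\ w = (c *: a, c * P a)].
  have W0 : W (0, 0) by exists 0; rewrite scale0r mul0r.
  have WD : forall w1 w2, W w1 -> W w2 -> W (w1.1 + w2.1, w1.2 + w2.2).
    move=> w1 w2 [c1 [c10 ->]] [c2 [c20 ->]]; exists (c1 + c2); split.
      exact: addr_ge0.
    by rewrite /= scalerDl mulrDl.
  have WZ : forall (c : R) w, 0 < c -> W w -> W (c *: w.1, c * w.2).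
    move=> c w c0 [c1 [c10 ->]]; exists (c * c1); split.
      by rewrite mulr_ge0 // ltW.
    by rewrite /= scalerA mulrA.
  have WN : forall w, W w -> w.2 <= P w.1.
    move=> w [c [c0 ->]] /=; have [->|cp] := eqVneq c 0.
      by rewrite scale0r mul0r sublin0.
    by rewrite sublinZ // lt_neqAle eq_sym cp.
  have sQa := Qinf_sublin sP W0 WD WZ WN.
  have QaP : forall x, Qinf P W x <= P x by move=> x; exact: Qinf_leN.
  have QaQ : forall x, Qinf P W x <= Q x.
    by move=> x; exact: le_trans (QaP x) (PQ x).
  have /tmax /asboolP h : r t (exist _ (Qinf P W) (conj sQa QaQ)).
    by apply/asboolP => x /=; exact: QaP.
  have h1 := h (- a); rewrite /= in h1.
  have h2 : Qinf P W (- a) <= P (- a + (1 *: a)) - 1 * P a.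
    by apply: (@Qinf_le _ _ P W sP WN (- a) (1 *: a, 1 * P a)); exists 1; split.
  rewrite scale1r mul1r addNr sublin0 // in h2.
  have h3 := sublinN sP a.
  move: h1 h2 h3; rewrite /P /= => h1 h2 h3.
  apply/eqP; rewrite eq_le; apply/andP; split; first by lra.
  by rewrite lerNl.
exists P; split; last exact: PQ.
exact: sublin_odd_lin.
Qed.

End HahnBanach.

Section Dual.
Context {R : realType} {X : normedModType R}.

Lemma dnorm_ge0 (f : X -> R) : (0 <= dnorm f)%E.
Proof.
apply: le_trans (ereal_sup_ubound _); last by exists 0%R; rewrite /unit_ball /= ?normr0.
by rewrite lee_fin.
Qed.

Lemma dnorm_le (f : X -> R) (a : R) : (0 <= a)%R ->
  (forall y, `|f y| <= a * `|y|)%R -> (dnorm f <= a%:E)%E.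
Proof.
move=> a0 h; apply: ge_ereal_sup => _ [y yb <-]; rewrite lee_fin.
apply: le_trans (h y) _; rewrite /unit_ball /= in yb.
by rewrite -{2}[a]mulr1 ler_wpM2l.
Qed.

Lemma dnorm_leP (f : X -> R) (a : R) : lin f -> (dnorm f <= a%:E)%E ->
  forall y, (`|f y| <= a * `|y|)%R.
Proof.
move=> lf h y; have [->|y0] := eqVneq y 0.
  by rewrite lin0 // !normr0 mulr0 ?normr0.
have ny : (0 < `|y|)%R by rewrite normr_gt0.
have : ((`|f (`|y|^-1 *: y)|)%:E <= a%:E)%E.
  apply: le_trans h; apply: ereal_sup_ubound; exists (`|y|^-1 *: y) => //.
  by rewrite /unit_ball /= normrZ normrV ?unitfE ?normr_eq0 // normr_id mulVf ?gt_eqF.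
rewrite lee_fin linZ // normrM normrV ?unitfE ?normr_eq0 // normr_id.
by rewrite -(ler_pM2l ny) mulrA mulfV ?gt_eqF // mul1r mulrC.
Qed.

Lemma dnorm_gt (f : X -> R) (a : R) : (a%:E < dnorm f)%E ->
  exists y, (`|y| <= 1 /\ a < `|f y|)%R.
Proof.
by move=> /ereal_sup_gt [_ [y yb <-]]; rewrite lte_fin => h; exists y.
Qed.

Lemma lin_cont_bound (f : X -> R) : lin f -> continuous f ->
  exists M, (0 < M /\ forall y, `|f y| <= M * `|y|)%R.
Proof.
move=> lf cf.
have h0 : f x @[x --> (0:X)] --> (0:R) by rewrite -(lin0 lf); exact: cf.
move: h0 => /cvgr_dist_lt /(_ 1%R ltr01).
move=> /nbhs_norm0P [e e0 he]; have {}e0 : (0 < e)%R := e0.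
exists (2 / e)%R; split; first by rewrite divr_gt0.
move=> y; have [->|y0] := eqVneq y 0.
  by rewrite lin0 // !normr0 mulr0 ?normr0.
have ny : (0 < `|y|)%R by rewrite normr_gt0.
pose c := (e / 2 / `|y|)%R.
have c0 : (0 < c)%R by rewrite /c !divr_gt0.
have := he (c *: y); rewrite /= normrZ gtr0_norm //.
have cn : (c * `|y| = e / 2)%R by rewrite /c -mulrA mulVf ?gt_eqF // mulr1.
rewrite cn sub0r normrN linZ // normrM gtr0_norm // => /(_ ltac:(lra)) h.
have e2 : (0 < e / 2)%R by rewrite divr_gt0.
have h2 : (e / 2 * `|f y| < `|y|)%R.
  have -> : (e / 2 * `|f y| = `|y| * (c * `|f y|))%R by rewrite -cn; ring.
  by rewrite -[X in (_ < X)%R]mulr1 ltr_pM2l.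
rewrite -(ler_pM2l e2); apply: ltW; apply: lt_le_trans h2 _.
have -> : (e / 2 * (2 / e * `|y|) = `|y|)%R.
  by field; rewrite gt_eqF.
by [].
Qed.

Lemma lin_bound_cont (f : X -> R) (M : R) : lin f -> (0 <= M)%R ->
  (forall y, `|f y| <= M * `|y|)%R -> continuous f.
Proof.
move=> lf M0 hM x; apply/cvgrPdist_lt => e e0.
apply/nbhs_normP; exists (e / (M + 1))%R => /=.
  by rewrite divr_gt0 // ltr_wpDl.
move=> z /= hz.
have M1 : (0 < M + 1)%R by rewrite ltr_wpDl.
move: hz; rewrite ltr_pdivlMr // => hz.
rewrite -linB //; apply: le_lt_trans (hM (x - z)) _.
have := normr_ge0 (x - z); nra.
Qed.

Lemma is_dual_fin (f : X -> R) : is_dual f ->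
  exists n, (0 <= n)%R /\ dnorm f = n%:E.
Proof.
move=> [lf cf]; have [M [M0 hM]] := lin_cont_bound lf cf.
have h1 := dnorm_ge0 f; have h2 := dnorm_le (ltW M0) hM.
by move: h1 h2; case: (dnorm f) => [r||] //= h1 _; exists r; split.
Qed.

Lemma linS (f : X -> R) (c : R) : lin f -> lin (fun y => c * f y).
Proof. by move=> lf a x y; rewrite lf; ring. Qed.

Lemma linDf (f g : X -> R) : lin f -> lin g -> lin (fun y => f y + g y).
Proof. by move=> lf lg a x y; rewrite lf lg; ring. Qed.

Lemma linBf (f g : X -> R) : lin f -> lin g -> lin (fun y => f y - g y).
Proof. by move=> lf lg a x y; rewrite lf lg; ring. Qed.

Lemma dnormS (f : X -> R) (c n : R) : lin f -> dnorm f = n%:E ->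
  dnorm (fun y => c * f y) = (`|c| * n)%:E.
Proof.
move=> lf hn.
have n0 : (0 <= n)%R by rewrite -lee_fin -hn dnorm_ge0.
have hf := dnorm_leP lf (ltac:(by rewrite hn) : (dnorm f <= n%:E)%E).
have le1 : (dnorm (fun y => (c * f y)%R) <= (`|c| * n)%:E)%E.
  apply: dnorm_le; first by rewrite mulr_ge0.
  by move=> y; rewrite normrM -mulrA ler_wpM2l.
have [->|c0] := eqVneq c 0.
  rewrite normr0 mul0r; apply/eqP; rewrite eq_le dnorm_ge0 andbT.
  by apply: dnorm_le => // y; rewrite mul0r normr0 mul0r.
have h1 := dnorm_ge0 (fun y => c * f y).
move: le1 h1; case E: (dnorm (fun y => c * f y)) => [m||] //= le1 h1.
rewrite lee_fin in le1.
have hm := dnorm_leP (linS c lf) (ltac:(by rewrite E) : (dnorm (fun y => (c * f y)%R) <= m%:E)%E).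
have cp : (0 < `|c|)%R by rewrite normr_gt0.
suff : (n <= `|c|^-1 * m)%R.
  move=> h; congr (_%:E); apply/eqP; rewrite eq_le le1 /=.
  by move: h; rewrite -(ler_pM2l cp) mulrA mulfV ?gt_eqF // mul1r.
rewrite -lee_fin -hn; apply: dnorm_le.
  by rewrite mulr_ge0 // invr_ge0 ltW.
move=> y; have := hm y; rewrite normrM => h.
by rewrite -(ler_pM2l cp) mulrA mulrA mulfV ?gt_eqF // mul1r.
Qed.

End Dual.

Section Sep.
Context {R : realType} {X : normedModType R}.

Lemma norm_sublin : sublin (fun y : X => `|y|).
Proof.
split; first by move=> x y; exact: ler_normD.
by move=> s x s0; rewrite normrZ gtr0_norm.
Qed.

Lemma separation (K : set X) (mu : R) : 0 <= mu ->
  (forall k1 k2 (s : R), K k1 -> K k2 -> 0 <= s -> s <= 1 ->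
     K (s *: k1 + (1 - s) *: k2)) ->
  (forall k, K k -> mu <= `|k|) ->
  exists f, lin f /\ (forall y, `|f y| <= `|y|) /\ (forall k, K k -> mu <= f k).
Proof.
move=> mu0 Kc Kmu.
pose N := fun y : X => `|y|.
pose W := [set w : X * R | w = (0, 0) \/
  exists l k, 0 < l /\ K k /\ w = (l *: k, l * mu)].
have W0 : W (0, 0) by left.
have WD : forall w1 w2, W w1 -> W w2 -> W (w1.1 + w2.1, w1.2 + w2.2).
  move=> w1 w2 [->|[l1 [k1 [l10 [Kk1 ->]]]]] [->|[l2 [k2 [l20 [Kk2 ->]]]]] /=.
  - by left; rewrite !addr0.
  - by right; exists l2, k2; rewrite !add0r.
  - by right; exists l1, k1; rewrite !addr0.
  right; exists (l1 + l2), ((l1 / (l1 + l2)) *: k1 + (1 - l1 / (l1 + l2)) *: k2).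
  have ll0 : 0 < l1 + l2 by rewrite addr_gt0.
  split => //; split.
    apply: Kc => //; first by rewrite divr_ge0 // ltW.
    by rewrite ler_pdivrMr // mul1r lerDl ltW.
  rewrite scalerDr !scalerA mulrDl; congr ((_ *: _ + _ *: _), _).
  all: try (by field; exact: lt0r_neq0).
  all: try (by ring).
have WZ : forall (c : R) w, 0 < c -> W w -> W (c *: w.1, c * w.2).
  move=> c w c0 [->|[l [k [l0 [Kk ->]]]]] /=.
    by left; rewrite scaler0 mulr0.
  right; exists (c * l), k; split; first by rewrite mulr_gt0.
  by split => //; rewrite scalerA mulrA.
have WN : forall w, W w -> w.2 <= N w.1.
  move=> w [->|[l [k [l0 [Kk ->]]]]] /=; first by rewrite /N normr0.
  by rewrite /N normrZ gtr0_norm // ler_pM2l // Kmu.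
have sQ := Qinf_sublin norm_sublin W0 WD WZ WN.
have [f [lf hf]] := hahn_banach sQ.
have fN : forall y, f y <= `|y|.
  by move=> y; apply: le_trans (hf y) _; exact: Qinf_leN norm_sublin W0 WN y.
exists f; split => //; split.
  move=> y; rewrite ler_norml fN andbT.
  by have := fN (- y); rewrite linN // normrN lerNl.
move=> k Kk.
have h1 := hf (- k).
have h2 : Qinf N W (- k) <= N (- k + (1 *: k)) - 1 * mu.
  apply: (@Qinf_le _ _ N W norm_sublin WN (- k) (1 *: k, 1 * mu)).
  by right; exists 1, k.
rewrite scale1r mul1r addNr /N normr0 sub0r in h2.
rewrite linN // in h1; lra.
Qed.

Lemma norming (x : X) :
  exists f, lin f /\ (forall y, `|f y| <= `|y|) /\ f x = `|x|.
Proof.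
have [f [lf [hf hx]]] := @separation [set x] `|x| (normr_ge0 x)
  ltac:(by move=> k1 k2 s -> -> _ _; rewrite -scalerDl addrC subrK scale1r)
  ltac:(by move=> k ->).
exists f; split => //; split => //.
apply/eqP; rewrite eq_le hx // andbT.
by apply: le_trans (hf x); exact: ler_norm.
Qed.

End Sep.

Section KerApprox.
Context {R : realType} {X : normedModType R}.

Lemma ker_approx (f g : X -> R) (u x : X) (th sg dl : R) :
  lin f -> lin g -> (forall y, `|g y| <= `|y|) -> (forall y, `|f y| <= `|y|) ->
  `|u| <= 1 -> 1 - th <= f u -> 0 < th -> th <= 2^-1 -> 0 <= sg ->
  0 <= g u ->
  (forall k, f k = 0 -> `|g k| <= sg * `|k|) ->
  `|x| = 1 -> 1 - dl <= g x ->
  forall y, `|f y - g y| <= (6 * sg + dl + 2 * th) * `|y|.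
Proof.
move=> lf lg hg hf u1 fu th0 th2 sg0 gu0 hk x1 gx y.
have fu0 : 2^-1 <= f u by lra.
have fup : 0 < f u by lra.
pose lam := g u / f u.
have lam0 : 0 <= lam by rewrite /lam divr_ge0 // ltW.
have gdec : forall y, g y = g (y - (f y / f u) *: u) + lam * f y.
  move=> z; rewrite (linB lg) (linZ lg) /lam; field; exact: lt0r_neq0.
have fk : forall y, f (y - (f y / f u) *: u) = 0.
  by move=> z; rewrite (linB lf) (linZ lf) divfK ?subrr // lt0r_neq0.
have nk : forall y, `|y - (f y / f u) *: u| <= 3 * `|y|.
  move=> z; apply: le_trans (ler_normB _ _) _.
  rewrite normrZ normrM normfV (gtr0_norm fup).
  have h1 : `|f z| / f u <= 2 * `|z|.
    rewrite ler_pdivrMr //; apply: le_trans (hf z) _.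
    have := normr_ge0 z; nra.
  have := normr_ge0 z; have := normr_ge0 (f z); have := normr_ge0 u.
  have : `|f z| / f u * `|u| <= 2 * `|z|.
    apply: le_trans h1; rewrite -[X in _ <= X]mulr1; apply: ler_wpM2l => //.
    by rewrite divr_ge0 // ltW.
  lra.
have gk : forall y, `|g y - lam * f y| <= 3 * sg * `|y|.
  move=> z; rewrite {1}(gdec z) addrK; apply: le_trans (hk _ (fk z)) _.
  have := nk z; have := normr_ge0 (z - f z / f u *: u); nra.
have lam1 : lam <= (f u)^-1.
  rewrite /lam -[X in _ <= X]mul1r ler_pM2r ?invr_gt0 //; apply: le_trans (ler_norm _) _.
  exact: le_trans (hg u) u1.
have lam2 : 1 - dl - 3 * sg <= lam.
  have := gk x; rewrite x1 mulr1 => h.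
  have := hf x; rewrite x1 => hfx.
  have : lam * f x <= lam.
    by apply: le_trans (ler_norm _) _; rewrite normrM ger0_norm // ler_piMr.
  have := ler_norm (g x - lam * f x); lra.
have dl0 : 0 <= dl.
  by have := hg x; rewrite x1; have := ler_norm (g x); lra.
have lamd : `|1 - lam| <= dl + 3 * sg + 2 * th.
  rewrite ler_norml; apply/andP; split; last by lra.
  suff : lam - 1 <= 2 * th by lra.
  suff : (f u)^-1 <= 1 + 2 * th by lra.
  rewrite -(ler_pM2r fup) mulVf ?lt0r_neq0 //.
  nra.
have e : f y - g y = (1 - lam) * f y - (g y - lam * f y) by ring.
rewrite e; apply: le_trans (ler_normB _ _) _.
rewrite normrM.
have := hf y; have := gk y; have := normr_ge0 (f y); have := normr_ge0 (1 - lam).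
have := normr_ge0 y.
nra.
Qed.

End KerApprox.

Section Forward.
Local Open Scope convex_scope.
Context {R : realType} {X : normedModType R}.

Lemma find_u (f : X -> R) (th : R) : lin f -> dnorm f = 1%:E -> 0 < th ->
  exists u, `|u| <= 1 /\ 1 - th <= f u.
Proof.
move=> lf nf th0.
have : ((1 - th)%:E < dnorm f)%E by rewrite nf lte_fin; lra.
move=> /dnorm_gt [y [y1 hy]].
have [fy0|fy0] := lerP 0 (f y).
  by exists y; split => //; move: hy; rewrite ger0_norm // => h; exact: ltW.
exists (- y); split; first by rewrite normrN.
by move: hy; rewrite ltr0_norm // (linN lf) => h; exact: ltW.
Qed.

Lemma C_props (f : X -> R) (a e : R) : is_dual f ->
  let C := [set y : X | `|y| <= a /\ f y <= - e] in
  closed C /\ bounded_set C /\ convex_set (C : set (convex_lmodType X)) /\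
  (forall y1 y2, C y1 -> C y2 -> `|y1 - y2| <= 2 * a).
Proof.
move=> [lf cf] C; split; last split; last split.
- apply: closedI.
    apply: (@preimage_closed _ _ (fun y : X => `|y|) [set r | r <= a]).
      by move=> y _; exact: norm_continuous.
    exact: closed_le.
  apply: (@preimage_closed _ _ f [set r | r <= - e]).
    by move=> y _; exact: cf.
  exact: closed_le.
- rewrite /= /bounded_near; near=> M => y [ya _] /=.
  apply: le_trans ya _; near: M; apply: nbhs_pinfty_ge.
  by rewrite num_real.
- move=> y1 y2 l; rewrite !inE => -[h1 f1] [h2 f2].
  have eqc : (y1 <| l |> y2 : X) = l%:num *: y1 + (1 - l%:num) *: y2 by [].
  have l0 : 0 <= l%:num by [].
  have l1 : l%:num <= 1 by [].
  rewrite /C eqc; split.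
    apply: le_trans (ler_normD _ _) _; rewrite !normrZ ger0_norm // ger0_norm ?subr_ge0 //.
    nra.
  rewrite lf (linZ lf); nra.
- move=> y1 y2 [h1 _] [h2 _]; apply: le_trans (ler_normB _ _) _; lra.
Unshelve. all: by end_near.
Qed.

Lemma forward : UMIP X -> forall t : R, 0 < t -> t < 1 -> (0%:E < beta X t)%E.
Proof.
move=> U t t0 t1.
pose e := t / 100.
have e0 : 0 < e by rewrite /e; lra.
have e1 : e <= 1 / 100 by rewrite /e; lra.
have [K [K0 HK]] := U e e0.
pose dl := e / (4 * (K + 1)).
have dl0 : 0 < dl by rewrite /dl divr_gt0 //; lra.
have dlK : dl * (K + 1) = e / 4.
  by rewrite /dl; field; apply: lt0r_neq0; lra.
have dle : dl <= e / 4 by nra.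
suff h : (dl%:E <= beta X t)%E by apply: lt_le_trans h; rewrite lte_fin.
apply: le_ereal_inf_tmp => _ [f [[lf cf] nf] <-].
have hf : forall y, `|f y| <= `|y|.
  by move=> y; have := dnorm_leP lf (ltac:(by rewrite nf) : (dnorm f <= 1%:E)%E) y; rewrite mul1r.
pose th := t / 8.
have th0 : 0 < th by rewrite /th; lra.
have th2 : th <= 2^-1 by rewrite /th; lra.
have [u [u1 fu]] := find_u lf nf th0.
pose a := (3 * e)^-1.
pose c := 2 * e.
pose b := a - c.
have ae : a * e = 1 / 3 by rewrite /a; field; exact: lt0r_neq0.
have be : 3 / 10 <= b * e by rewrite /b mulrBl ae /c; nra.
have b0 : 0 < b by nra.
pose C := [set y : X | `|y| <= a /\ f y <= - e].
have [Ccl [Cbd [Ccv Cdiam]]] := @C_props f a e (conj lf cf).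
have cfu : e <= c * f u by rewrite /c; nra.
have y0C : C ((- c) *: u).
  split.
    rewrite normrZ normrN ger0_norm; last by rewrite /c; lra.
    have := normr_ge0 u; rewrite /c; nra.
  rewrite (linZ lf) /c; nra.
have Cn0 : C !=set0 by exists ((- c) *: u).
have Cd : (diam C < (e^-1)%:E)%E.
  apply: (@le_lt_trans _ _ (2 * a)%:E).
    by apply: ge_ereal_sup => _ [a1 Ca1 [b1 Cb1 <-]]; rewrite lee_fin; exact: Cdiam.
  rewrite lte_fin -(ltr_pM2r e0) mulVf ?lt0r_neq0 // -mulrA ae; lra.
have Cdist : (e%:E <= dist_set (0%R : X) C)%E.
  apply: le_ereal_inf_tmp => _ [y [ya fy] <-]; rewrite lee_fin sub0r normrN.
  apply: le_trans _ (hf y); have := ler_norm (- f y); rewrite normrN; lra.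
have [z [r0 [Csub [Hd r0K]]]] := HK C 0 Cn0 Ccl Cbd Ccv Cd Cdist.
have Hball : forall w, `|w - z| <= r0 -> e / 2 <= `|w|.
  move=> w hw; rewrite -lee_fin; apply: le_trans Hd _.
  by apply: ereal_inf_lbound; exists w => //; rewrite sub0r normrN.
have r00 : 0 <= r0 by apply: le_trans (Csub _ y0C); exact: normr_ge0.
have zr : r0 + e / 2 <= `|z|.
  have [hz|hz] := lerP `|z| r0.
    have := Hball 0; rewrite sub0r normrN normr0 => /(_ hz); lra.
  have zp : 0 < `|z| by lra.
  pose sc := (`|z| - r0) / `|z|.
  have sc0 : 0 <= sc by rewrite /sc divr_ge0 //; lra.
  have hd : `|sc *: z - z| = r0.
    have -> : sc *: z - z = (- (r0 / `|z|)) *: z.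
      rewrite /sc -[X in _ - X]scale1r -scalerBl; congr (_ *: _).
      by field; exact: lt0r_neq0.
    by rewrite normrZ normrN ger0_norm ?divr_ge0 // divfK ?lt0r_neq0.
  have hsc : `|sc *: z| = `|z| - r0.
    by rewrite normrZ ger0_norm // /sc divfK ?lt0r_neq0.
  have := Hball (sc *: z); rewrite hd hsc => /(_ (lexx _)); lra.
have zp : 0 < `|z| by lra.
pose x := (- `|z|^-1) *: z.
have x1 : `|x| = 1.
  by rewrite /x normrZ normrN normfV normr_id mulVf ?lt0r_neq0.
have gC : forall g, lin g -> (forall y, `|g y| <= `|y|) -> 1 - dl <= g x ->
    forall y, C y -> g y <= - (e / 4).
  move=> g lg hg gx y Cy.
  have hyz := Csub y Cy.
  have gyz : g y - g z <= r0.
    rewrite -(linB lg); apply: le_trans (ler_norm _) _; exact: le_trans (hg _) hyz.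
  have gzx : g z = - (`|z| * g x).
    by rewrite /x (linZ lg); field; exact: lt0r_neq0.
  have h1 : `|z| * (1 - dl) <= `|z| * g x by rewrite ler_pM2l.
  have h2 : (r0 + e / 2) * (1 - dl) <= `|z| * (1 - dl).
    by rewrite ler_pM2r //; lra.
  have h3 : dl * r0 <= dl * K by rewrite ler_pM2l.
  have h4 : dl * (e / 2) <= dl by rewrite -[X in _ <= X]mulr1 ler_pM2l //; lra.
  move: h2; rewrite mulrDl !mulrBr !mulr1 => h2.
  have : dl * K + dl = e / 4 by rewrite -dlK; ring.
  move: h1; rewrite mulrBr mulr1 => h1.
  rewrite gzx in gyz.
  have : r0 * dl = dl * r0 by rewrite mulrC.
  have : e / 2 * dl = dl * (e / 2) by rewrite mulrC.
  lra.
apply: le_ereal_sup_tmp; exists (beta_fxt f x t); first by exists x.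
apply: le_ereal_inf_tmp => _ [g [[[lg cg] ng] gt] <-]; rewrite lee_fin.
rewrite leNgt; apply/negP => hlt.
have hg : forall y, `|g y| <= `|y|.
  by move=> y; have := dnorm_leP lg ng y; rewrite mul1r.
have gx : 1 - dl <= g x by lra.
have gCb := gC g lg hg gx.
have gu : 0 < g u.
  have := gCb _ y0C; rewrite (linZ lg) /c; nra.
have gu1 : g u <= 1 by apply: le_trans (ler_norm _) _; exact: le_trans (hg u) u1.
pose sg := c / b.
have sg0 : 0 <= sg by rewrite /sg divr_ge0 // /c; lra.
have sgb : sg * b = c by rewrite /sg divfK ?lt0r_neq0.
have hk : forall k, f k = 0 -> `|g k| <= sg * `|k|.
  move=> k fk0; have [->|k0] := eqVneq k 0.
    by rewrite (lin0 lg) !normr0 mulr0.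
  have kp : 0 < `|k| by rewrite normr_gt0.
  have [m [m0 mk]] : exists m, 0 < m /\ m * `|k| = b.
    by exists (b / `|k|); rewrite divr_gt0 // divfK ?lt0r_neq0.
  have Cpm : forall sgn : R, `|sgn| = 1 -> C ((sgn * m) *: k + (- c) *: u).
    move=> sgn hs; split.
      apply: le_trans (ler_normD _ _) _; rewrite normrZ (normrZ (- c)) normrM hs mul1r.
      rewrite (gtr0_norm m0) mk normrN ger0_norm /c; last by lra.
      have : 2 * e * `|u| <= 2 * e by rewrite -[X in _ <= X]mulr1 ler_wpM2l //; lra.
      rewrite /b /c; lra.
    rewrite (linD lf) !(linZ lf) fk0 mulr0 add0r; lra.
  have hp := gCb _ (Cpm 1 (normr1 _)).
  have hm := gCb _ (Cpm (-1) ltac:(by rewrite normrN normr1)).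
  rewrite (linD lg) !(linZ lg) mul1r in hp.
  rewrite (linD lg) !(linZ lg) mulN1r in hm.
  have cgu : c * g u <= c by rewrite -[X in _ <= X]mulr1 ler_wpM2l // /c; lra.
  have hmg : m * `|g k| <= c.
    have [gk0|gk0] := lerP 0 (g k).
      rewrite ger0_norm //; lra.
    rewrite ltr0_norm //; lra.
  rewrite -(ler_pM2l m0); apply: le_trans hmg _.
  by rewrite mulrA [m * sg]mulrC -mulrA mk sgb.
have kapp := ker_approx lf lg hg hf u1 fu th0 th2 sg0 (ltW gu) hk x1 gx.
have hn : (dnorm (fun y => (f y - g y)%R) <= (6 * sg + dl + 2 * th)%:E)%E.
  apply: dnorm_le; last exact: kapp.
  by have := normr_ge0 (f 0 - g 0); have := kapp 0; rewrite normr0 mulr0; lra.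
have := le_trans gt hn; rewrite lee_fin.
have sge : sg <= e.
  have : sg * (b * e) = 2 * e * e by rewrite mulrA sgb /c; ring.
  nra.
rewrite /th /e in sge dle *; lra.
Qed.

End Forward.

Section Backward.
Context {R : realType} {X : normedModType R}.
Local Open Scope convex_scope.

Lemma cvx_helper (C : set X) : convex_set (C : set (convex_lmodType X)) ->
  forall c1 c2 (s : R), C c1 -> C c2 -> 0 <= s -> s <= 1 ->
  C (s *: c1 + (1 - s) *: c2).
Proof.
move=> cv c1 c2 s h1 h2 s0 s1.
have := cv c1 c2 (Itv01 s0 s1); rewrite !inE => /(_ h1 h2).
by [].
Qed.

Lemma backward : (forall t : R, 0 < t -> t < 1 -> (0%:E < beta X t)%E) -> UMIP X.
Proof.
move=> hb e e0.
pose D := e^-1.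
have D0 : 0 < D by rewrite invr_gt0.
have De : D * e = 1 by rewrite mulVf ?lt0r_neq0.
pose t := e / (2 * (5 * D + e)).
have den0 : 0 < 2 * (5 * D + e) by lra.
have t0 : 0 < t by rewrite /t divr_gt0.
have tden : t * (5 * D + e) = e / 2.
  by rewrite /t; field; apply: lt0r_neq0; lra.
have t1 : t < 1 by nra.
have [dl [dl0 dlb]] : exists dl, 0 < dl /\ (dl%:E < beta X t)%E.
  have := hb t t0 t1; case: (beta X t) => [r||] //= hr.
    exists (r / 2); move: hr; rewrite !lte_fin => hr; split; lra.
  by exists 1; split => //; rewrite ltry.
pose Rr := D / dl.
have Rdl : Rr * dl = D by rewrite /Rr divfK ?lt0r_neq0.
have Rr0 : 0 < Rr by rewrite /Rr divr_gt0.
have tD0 : 0 < t * D by rewrite mulr_gt0.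
exists (Rr + 3 * t * D + 1); split; first by lra.
move=> C p Cn0 Ccl Cbd Ccv Cdiam Cdist.
have [c1 Cc1] := Cn0.
have hD : forall c c', C c -> C c' -> `|c - c'| <= D.
  move=> c c' hc hc'; apply/ltW; rewrite -lte_fin; apply: le_lt_trans Cdiam.
  by apply: ereal_sup_ubound; exists c => //; exists c'.
have hdist : forall c, C c -> e <= `|p - c|.
  move=> c hc; rewrite -lee_fin; apply: le_trans Cdist _.
  by apply: ereal_inf_lbound; exists c.
pose d := `|p - c1|.
pose mu := Num.max e (d - D).
have mue : e <= mu by rewrite le_max lexx.
have mud : d - D <= mu by rewrite le_max lexx orbT.
have hmu : forall c, C c -> mu <= `|p - c|.
  move=> c hc; rewrite ge_max hdist //=.
  have ep : p - c1 = (p - c) + (c - c1) by rewrite addrA subrK.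
  have := ler_normD (p - c) (c - c1); rewrite -ep.
  have := hD c c1 hc Cc1; rewrite /d; lra.
have [f0 [lf0 [hf0 sf0]]] := @separation _ X [set p - c | c in C] mu
  ltac:(lra)
  ltac:(move=> _ _ s [c Cc <-] [c' Cc' <-] s0 s1;
        exists (s *: c + (1 - s) *: c'); first exact: cvx_helper;
        by rewrite !scalerBr [in LHS]opprD addrACA -scalerDl [s + _]addrC subrK scale1r)
  ltac:(by move=> _ [c Cc <-]; exact: hmu).
have cf0 : continuous f0.
  by apply: (lin_bound_cont lf0 ler01) => y; rewrite mul1r.
have [n0 [n00 hn0]] := is_dual_fin (conj lf0 cf0).
have n01 : n0 <= 1.
  rewrite -lee_fin -hn0; apply: dnorm_le => // y; rewrite mul1r; exact: hf0.
have hf0n := dnorm_leP lf0 (ltac:(by rewrite hn0) : (dnorm f0 <= n0%:E)%E).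
have f0p : forall c, C c -> mu <= f0 (p - c) by move=> c Cc; apply: sf0; exists c.
have n0p : 0 < n0.
  rewrite lt_neqAle n00 andbT; apply/eqP => h0.
  have := hf0n (p - c1); rewrite -h0 mul0r.
  have := f0p c1 Cc1; have := ler_norm (f0 (p - c1)); lra.
pose f := fun y => n0^-1 * f0 y.
have lf : lin f := linS _ lf0.
have nf : dnorm f = 1%:E.
  by rewrite (dnormS _ lf0 hn0) ger0_norm ?invr_ge0 // mulVf ?lt0r_neq0.
have cf : continuous f.
  apply: (@lin_bound_cont _ _ f n0^-1 lf); first by rewrite invr_ge0.
  move=> y; rewrite /f normrM ger0_norm ?invr_ge0 //.
  by rewrite ler_pM2l ?invr_gt0 //; exact: hf0.
have ninv : 1 <= n0^-1 by rewrite -(ler_pM2l n0p) mulr1 mulfV ?lt0r_neq0.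
have sf : forall c, C c -> mu <= f (p - c).
  move=> c Cc; have := f0p c Cc; rewrite /f => h.
  have : f0 (p - c) <= n0^-1 * f0 (p - c).
    by rewrite -[X in X <= _]mul1r ler_wpM2r //; lra.
  lra.
have [x [x1 hx]] : exists x, `|x| = 1 /\ forall g, lin g ->
    (forall y, `|g y| <= `|y|) -> 1 - dl <= g x ->
    forall y, `|f y - g y| <= t * `|y|.
  have h1 : (beta X t <= beta_ft f t)%E.
    by apply: ereal_inf_lbound; exists f => //; split => //; split.
  have := lt_le_trans dlb h1 => /ereal_sup_gt [_ [x x1 <-] hx].
  exists x; split => // g lg hg gx.
  have : (dnorm (fun y => (f y - g y)%R) <= t%:E)%E.
    rewrite leNgt; apply/negP => ht.
    have : (beta_fxt f x t <= (1 - g x)%:E)%E.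
      apply: ereal_inf_lbound; exists g => //; split; last exact: ltW.
      split; first split => //.
        by apply: (lin_bound_cont lg ler01) => y; rewrite mul1r.
      by apply: dnorm_le => // y; rewrite mul1r.
    by move=> /(lt_le_trans hx); rewrite lte_fin; lra.
  by move=> hn y; exact: dnorm_leP (linBf lf lg) hn y.
have [h [lh [hh hhx]]] := norming x.
have fh : forall y, `|f y - h y| <= t * `|y|.
  by apply: hx => //; rewrite hhx x1; lra.
pose S := [set h c | c in C].
have Sub : ubound S (h c1 + D).
  move=> _ [c Cc <-].
  have : h (c - c1) <= D.
    apply: le_trans (ler_norm _) _; apply: le_trans (hh _) _; exact: hD.
  rewrite (linB lh); lra.
have hsup : has_sup S by split; [exists (h c1), c1|exists (h c1 + D)].
have [_ [c0 Cc0 <-] hc0] := sup_adherent tD0 hsup.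
have hc0' : forall c, C c -> h c - h c0 <= t * D.
  move=> c Cc; have : h c <= sup S by apply: sup_upper_bound => //; exists c.
  lra.
pose z := c0 - Rr *: x.
pose r := Rr + 3 * t * D.
have pz : p - z = (p - c0) + Rr *: x by rewrite /z opprD opprK addrA.
exists z, r; split; last split.
- move=> c Cc; rewrite /cball /=.
  have [g [lg [hg gval]]] := norming (c - z).
  rewrite -gval.
  have -> : c - z = (c - c0) + Rr *: x by rewrite /z opprD opprK addrA.
  rewrite (linD lg) (linZ lg).
  have hcc0 := hD c c0 Cc Cc0.
  have gcc0 : g (c - c0) <= `|c - c0|.
    by apply: le_trans (ler_norm _) _; exact: hg.
  have gx1 : g x <= 1.
    by apply: le_trans (ler_norm _) _; rewrite -x1; exact: hg.
  have Rgx : Rr * g x <= Rr by rewrite -[X in _ <= X]mulr1 ler_pM2l.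
  have [gxd|gxd] := lerP (1 - dl) (g x).
    have fg := hx g lg hg gxd (c - c0).
    have fh' := fh (c - c0).
    have := ler_norm (- (f (c - c0) - g (c - c0))); rewrite normrN.
    have := ler_norm (f (c - c0) - h (c - c0)).
    have := hc0' c Cc; rewrite -(linB lh).
    have : t * `|c - c0| <= t * D by rewrite ler_pM2l.
    rewrite /r; lra.
  have : Rr * g x <= Rr * (1 - dl) by rewrite ler_pM2l //; lra.
  rewrite mulrBr mulr1 Rdl.
  rewrite /r; lra.
- apply: le_ereal_inf_tmp => _ [w hw <-]; rewrite lee_fin.
  rewrite /cball /= in hw.
  have epw : p - z = (p - w) + (w - z) by rewrite addrA subrK.
  have := ler_normD (p - w) (w - z); rewrite -epw => hpw.
  have hpz : h (p - z) <= `|p - z|.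
    by apply: le_trans (ler_norm _) _; exact: hh.
  rewrite pz (linD lh) (linZ lh) hhx x1 mulr1 -pz in hpz.
  have := fh (p - c0).
  have := ler_norm (f (p - c0) - h (p - c0)).
  have := sf c0 Cc0.
  have hpc0 : `|p - c0| <= d + D.
    have ep : p - c0 = (p - c1) + (c1 - c0) by rewrite addrA subrK.
    rewrite ep; apply: le_trans (ler_normD _ _) _.
    by have := hD c1 c0 Cc1 Cc0; rewrite /d; lra.
  have ht : t * `|p - c0| <= t * (d + D) by rewrite ler_pM2l.
  have hm : e - t * (2 * D + e) <= mu - t * (d + D).
    have [hd|hd] := lerP d (D + e).
      have : t * (d + D) <= t * (2 * D + e) by rewrite ler_pM2l //; lra.
      lra.
    have : (D + e) * (1 - t) <= d * (1 - t) by rewrite ler_pM2r; lra.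
    nra.
  rewrite /r in hw; lra.
- by rewrite /r; lra.
Qed.

End Backward.

Unset Implicit Arguments.

Theorem mainTheorem13 (R : realType) (X : completeNormedModType R) :
  UMIP X <-> (forall t : R, 0 < t -> t < 1 -> (0%:E < beta X t)%E).
Proof.
split; [exact: forward | exact: backward].
Qed.
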